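(* Let $\mathsf X$ and $\mathsf A$ be finite sets, let $p:\mathsf X\times\mathsf A\times\mathcal P(\mathsf X)\to\mathcal P(\mathsf X)$ and $r:\mathsf X\times\mathsf A\times\mathcal P(\mathsf X)\to[0,\infty)$, and suppose there are constants $L_1,K_1\ge 0$ such that for all $x,\hat x\in\mathsf X$, $a,\hat a\in\mathsf A$, $\mu,\hat\mu\in\mathcal P(\mathsf X)$: $$|r(x,a,\mu)-r(\hat x,\hat a,\hat\mu)|\le L_1\big(1_{\{x\neq\hat x\}}+2\cdot 1_{\{a\neq\hat a\}}+\|\mu-\hat\mu\|_1\big),$$ $$\|p(\cdot|x,a,\mu)-p(\cdot|\hat x,\hat a,\hat\mu)\|_1\le K_1\big(1_{\{x\neq\hat x\}}+2\cdot 1_{\{a\neq\hat a\}}+\|\mu-\hat\mu\|_1\big).$$ Let $\mathsf U=\mathcal P(\mathsf A)$ and define $P(\cdot|x,u,\mu)=\sum_{a\in\mathsf A}p(\cdot|x,a,\mu)\,u(a)$ and $R(x,u,\mu)=\sum_{a\in\mathsf A}r(x,a,\mu)\,u(a)$. Then for all $x,\hat x\in\mathsf X$, $u,\hat u\in\mathsf U$, $\mu,\hat\mu\in\mathcal P(\mathsf X)$: $$|R(x,u,\mu)-R(\hat x,\hat u,\hat\mu)|\le L_1\big(1_{\{x\neq\hat x\}}+\|u-\hat u\|_1+\|\mu-\hat\mu\|_1\big),$$ $$\|P(\cdot|x,u,\mu)-P(\cdot|\hat x,\hat u,\hat\mu)\|_1\le K_1\big(1_{\{x\neq\hat x\}}+\|u-\hat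 u\|_1+\|\mu-\hat\mu\|_1\big).$$
   Context: For a finite set $\mathsf E$, $\mathcal P(\mathsf E)$ denotes the set of probability distributions on $\mathsf E$, viewed as vectors in $\mathbb R^{\mathsf E}$ and endowed with the $l_1$-norm $\|\cdot\|_1$. *)

(* Defs.v *)
From mathcomp Require Import all_boot all_order all_algebra.
Set Implicit Arguments. Unset Strict Implicit. Unset Printing Implicit Defensive.
Import Order.TTheory GRing.Theory Num.Theory.
Local Open Scope ring_scope.

Definition is_prob (R : numDomainType) (E : finType) (m : {ffun E -> R}) : bool :=
  [forall e, 0 <= m e] && (\sum_(e : E) m e == 1).

Definition l1 (R : numDomainType) (E : finType) (m : {ffun E -> R}) : R :=
  \sum_(e : E) `|m e|.

Definition ind (R : numDomainType) (b : bool) : R := if b then 1 else 0.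

Definition mixP (R : numDomainType) (X A : finType)
  (p : X -> A -> {ffun X -> R} -> {ffun X -> R})
  (x : X) (u : {ffun A -> R}) (mu : {ffun X -> R}) : {ffun X -> R} :=
  [ffun y => \sum_(a : A) p x a mu y * u a].

Definition mixR (R : numDomainType) (X A : finType)
  (r : X -> A -> {ffun X -> R} -> R)
  (x : X) (u : {ffun A -> R}) (mu : {ffun X -> R}) : R :=
  \sum_(a : A) r x a mu * u a.

(* Main.v *)
Require Import Defs.
From mathcomp Require Import all_boot all_order all_algebra.
From mathcomp Require Import lra.
Set Implicit Arguments. Unset Strict Implicit. Unset Printing Implicit Defensive.
Import Order.TTheory GRing.Theory Num.Theory.
Local Open Scope ring_scope.

Section Gen.
Variables (R : realFieldType) (V : lmodType R) (N : V -> R).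
Hypothesis ND : forall x y, N (x + y) <= N x + N y.
Hypothesis NZ : forall (c : R) x, N (c *: x) = `|c| * N x.

Lemma N0 : N 0 = 0.
Proof. by rewrite -(scale0r (0 : V)) NZ normr0 mul0r. Qed.

Lemma Nge0 v : 0 <= N v.
Proof.
have := ND v (- v); rewrite subrr N0 -scaleN1r NZ normrN normr1 mul1r.
move=> h; lra.
Qed.


Lemma Nsum (I : finType) (f : I -> V) : N (\sum_i f i) <= \sum_i N (f i).
Proof.
apply: (big_ind2 (fun x y => N x <= y)); first by rewrite N0.
  by move=> x1 x2 y1 y2 h1 h2; apply: le_trans (ND _ _) _; apply: lerD.
by [].
Qed.

Lemma mixbound (A : finType) (q : A -> V) (d : A -> R) (C : R) :
  \sum_a d a = 0 -> (forall a b, N (q a - q b) <= 2 * C) ->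
  N (\sum_a d a *: q a) <= C * \sum_a `|d a|.
Proof.
move=> hd hq.
pose dp a := Num.max (d a) 0; pose dn a := Num.max (- d a) 0.
have dE a : d a = dp a - dn a.
  rewrite /dp /dn; case: (lerP 0 (d a)) => h.
    have -> : Num.max (- d a) 0 = 0 by apply: max_r; rewrite oppr_le0. by rewrite subr0.
  have -> : Num.max (- d a) 0 = - d a by apply: max_l; rewrite oppr_ge0 ltW.
  by rewrite opprK add0r.
have nE a : `|d a| = dp a + dn a.
  rewrite /dp /dn; case: (lerP 0 (d a)) => h.
    have -> : Num.max (- d a) 0 = 0 by apply: max_r; rewrite oppr_le0.
    by rewrite addr0 ger0_norm.
  have -> : Num.max (- d a) 0 = - d a by apply: max_l; rewrite oppr_ge0 ltW.
  by rewrite add0r ltr0_norm.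
have dp0 a : 0 <= dp a by rewrite /dp le_max lexx orbT.
have dn0 a : 0 <= dn a by rewrite /dn le_max lexx orbT.
set S := \sum_a dp a.
have SnE : \sum_a dn a = S.
  apply/eqP; rewrite eq_sym -subr_eq0 /S -sumrB; apply/eqP.
  by under eq_bigr do rewrite -dE.
have S0 : 0 <= S by apply: sumr_ge0.
have sumabs : \sum_a `|d a| = 2 * S.
  rewrite (eq_bigr _ (fun a _ => nE a)) big_split /= SnE -/S; lra.
have key : S *: \sum_a d a *: q a =
    \sum_a \sum_b (dp a * dn b) *: (q a - q b).
  under [RHS]eq_bigr => a _ do rewrite (eq_bigr _ (fun b _ => scalerBr _ _ _)) sumrB.
  rewrite sumrB.
  under [X in _ = X - _]eq_bigr => a _ do rewrite -scaler_suml -mulr_sumr SnE.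
  rewrite exchange_big /=.
  under [X in _ = _ - X]eq_bigr => b _ do rewrite -scaler_suml -mulr_suml.
  rewrite -/S -sumrB scaler_sumr; apply: eq_bigr => a _.
  by rewrite scalerA -scalerBl dE mulrBr [S * _]mulrC.
have bound : S * N (\sum_a d a *: q a) <= S * (2 * C * S).
  rewrite -(ger0_norm S0) -NZ key (ger0_norm S0).
  apply: le_trans (Nsum _) _.
  apply: le_trans (_ : \sum_a \sum_b (dp a * dn b) * (2 * C) <= _).
    apply: ler_sum => a _; apply: le_trans (Nsum _) _.
    apply: ler_sum => b _; rewrite NZ ger0_norm ?mulr_ge0 //.
    by apply: ler_wpM2l; rewrite ?mulr_ge0.
  rewrite (eq_bigr (fun a => dp a * (2 * C * S))); last first.
    by move=> a _; rewrite -mulr_suml -mulr_sumr SnE; lra.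
  by rewrite -mulr_suml mulrC.
rewrite sumabs.
have [Sp|] := ltP 0 S.
  by move: bound; rewrite ler_pM2l //; lra.
move=> Sle; have SS : S = 0 by apply/le_anti; rewrite Sle S0.
have d0 a : d a = 0.
  have h1 := psumr_eq0P (fun a _ => dp0 a) SS (i:=a) isT.
  have SnE' : \sum_a dn a = 0 by rewrite SnE.
  have h2 := psumr_eq0P (fun a _ => dn0 a) SnE' (i:=a) isT.
  by rewrite dE h1 h2 subr0.
rewrite big1 ?N0 ?SS ?mulr0 // => a _; by rewrite d0 scale0r.
Qed.

Lemma mixmain (A : finType) (f g : A -> V) (u uh : A -> R) (B C : R) :
  (forall a, N (f a - g a) <= B) -> (forall a b, N (g a - g b) <= 2 * C) ->
  (forall a, 0 <= u a) -> \sum_a u a = 1 -> \sum_a uh a = 1 ->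
  N (\sum_a u a *: f a - \sum_a uh a *: g a) <= B + C * \sum_a `|u a - uh a|.
Proof.
move=> hB hC u0 u1 uh1.
have -> : \sum_a u a *: f a - \sum_a uh a *: g a =
   \sum_a u a *: (f a - g a) + \sum_a (u a - uh a) *: g a.
  rewrite -sumrB -big_split; apply: eq_bigr => a _.
  by rewrite /= scalerBr scalerBl addrA addrNK.
apply: le_trans (ND _ _) _; apply: lerD.
  apply: le_trans (Nsum _) _.
  apply: le_trans (_ : \sum_a u a * B <= _).
    apply: ler_sum => a _; rewrite NZ ger0_norm //; exact: ler_wpM2l.
  by rewrite -mulr_suml u1 mul1r.
apply: mixbound => //.
by rewrite sumrB u1 uh1 subrr.
Qed.
End Gen.

Lemma l1D (R : realFieldType) (E : finType) (x y : {ffun E -> R}) :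
  l1 (x + y) <= l1 x + l1 y.
Proof.
rewrite /l1 -big_split /=; apply: ler_sum => e _; rewrite ffunE; exact: ler_normD.
Qed.

Lemma l1Z (R : realFieldType) (E : finType) (c : R) (x : {ffun E -> R^o}) :
  l1 (c *: x) = `|c| * l1 x.
Proof. rewrite /l1 mulr_sumr; apply: eq_bigr => e _; by rewrite ffunE normrM. Qed.

Lemma l1_0 (R : realFieldType) (E : finType) (x : {ffun E -> R}) : l1 (x - x) = 0.
Proof. by rewrite /l1 big1 // => e _; rewrite !ffunE subrr normr0. Qed.

Lemma ind_le1 (R : realFieldType) b : ind R b <= 1.
Proof. by case: b; rewrite /ind. Qed.

Lemma ind_ge0 (R : realFieldType) b : 0 <= ind R b.
Proof. by case: b; rewrite /ind. Qed.

Lemma probP (R : realFieldType) (E : finType) (m : {ffun E -> R}) :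
  is_prob m -> (forall e, 0 <= m e) /\ \sum_e m e = 1.
Proof. by case/andP => /forallP h /eqP. Qed.

Lemma l1B (R : realFieldType) (E : finType) (u uh : {ffun E -> R}) :
  l1 (u - uh) = \sum_e `|u e - uh e|.
Proof. by rewrite /l1; apply: eq_bigr => e _; rewrite !ffunE. Qed.

Theorem proposition1 (R : realFieldType) (X A : finType)
  (p : X -> A -> {ffun X -> R} -> {ffun X -> R})
  (r : X -> A -> {ffun X -> R} -> R) (L1 K1 : R)
  (hL1 : 0 <= L1) (hK1 : 0 <= K1)
  (hp : forall x a mu, is_prob mu -> is_prob (p x a mu))
  (hr : forall x a mu, is_prob mu -> 0 <= r x a mu)
  (hrL : forall x xh a ah mu muh, is_prob mu -> is_prob muh ->
     `|r x a mu - r xh ah muh|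
       <= L1 * (ind R (x != xh) + 2 * ind R (a != ah) + l1 (mu - muh)))
  (hpL : forall x xh a ah mu muh, is_prob mu -> is_prob muh ->
     l1 (p x a mu - p xh ah muh)
       <= K1 * (ind R (x != xh) + 2 * ind R (a != ah) + l1 (mu - muh))) :
  forall (x xh : X) (u uh : {ffun A -> R}) (mu muh : {ffun X -> R}),
    is_prob u -> is_prob uh -> is_prob mu -> is_prob muh ->
    `|mixR r x u mu - mixR r xh uh muh|
      <= L1 * (ind R (x != xh) + l1 (u - uh) + l1 (mu - muh))
    /\
    l1 (mixP p x u mu - mixP p xh uh muh)
      <= K1 * (ind R (x != xh) + l1 (u - uh) + l1 (mu - muh)).
Proof.
move=> x xh u uh mu muh pu puh pmu pmuh.
have [u0 u1] := probP pu; have [_ uh1] := probP puh.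
have i0 := ind_ge0 R; have i1 := ind_le1 R.
have l1ge0 : forall (E : finType) (m : {ffun E -> R}), 0 <= l1 m.
  by move=> E m; apply: sumr_ge0 => e _.
split.
- pose N := fun z : R^o => `|z|.
  have := @mixmain R R^o N (fun a b => ler_normD a b) (fun c z => normrM c z) A
    (fun a => r x a mu) (fun a => r xh a muh) u uh
    (L1 * (ind R (x != xh) + l1 (mu - muh))) L1.
  rewrite /N /mixR.
  have -> : \sum_a r x a mu * u a = \sum_a u a *: (r x a mu : R^o).
    by apply: eq_bigr => a _; rewrite mulrC.
  have -> : \sum_a r xh a muh * uh a = \sum_a uh a *: (r xh a muh : R^o).
    by apply: eq_bigr => a _; rewrite mulrC.
  move=> H; apply: le_trans (H _ _ _ _ _) _.
  + move=> a; apply: le_trans (hrL _ _ _ _ _ _ pmu pmuh) _.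
    rewrite eqxx /ind /= mulr0 addr0 lexx //.
  + move=> a b; apply: le_trans (hrL _ _ _ _ _ _ pmuh pmuh) _.
    rewrite eqxx l1_0; have := i1 (a != b); have := i0 (a != b).
    set t := ind R (a != b); rewrite /ind /=; nra.
  + exact: u0.
  + exact: u1.
  + exact: uh1.
  + rewrite (l1B u uh) !mulrDr; lra.
- have := @mixmain R {ffun X -> R^o} (@l1 R X) (@l1D R X) (@l1Z R X) A
    (fun a => (p x a mu : {ffun X -> R^o})) (fun a => (p xh a muh : {ffun X -> R^o})) u uh
    (K1 * (ind R (x != xh) + l1 (mu - muh))) K1.
  have -> : mixP p x u mu = \sum_a u a *: (p x a mu : {ffun X -> R^o}).
    by apply/ffunP => y; rewrite ffunE sum_ffunE; apply: eq_bigr => a _; rewrite ffunE mulrC.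
  have -> : mixP p xh uh muh = \sum_a uh a *: (p xh a muh : {ffun X -> R^o}).
    by apply/ffunP => y; rewrite ffunE sum_ffunE; apply: eq_bigr => a _; rewrite ffunE mulrC.
  move=> H; apply: le_trans (H _ _ _ _ _) _.
  + move=> a; apply: le_trans (hpL _ _ _ _ _ _ pmu pmuh) _.
    rewrite eqxx /ind /= mulr0 addr0 lexx //.
  + move=> a b; apply: le_trans (hpL _ _ _ _ _ _ pmuh pmuh) _.
    rewrite eqxx l1_0; have := i1 (a != b); have := i0 (a != b).
    set t := ind R (a != b); rewrite /ind /=; nra.
  + exact: u0.
  + exact: u1.
  + exact: uh1.
  + rewrite (l1B u uh) !mulrDr; lra.
Qed.
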